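(* For every $\psi_u\in(0,2\pi)$, $$\alpha_{\mathrm I}=\frac{\zeta_u\cos^2\!\big(-2\pi t-\frac{\pi}{\mu}+\frac{2\pi}{\mu}\lceil t\mu\rceil\big)}{V^2},$$ where $t=\frac34-\frac{\psi_u}{2\pi}\in(-\tfrac14,\tfrac34)$ and $V=\sin(\pi/\mu)/W$. In particular, if $\psi_u$ is uniform on $(0,2\pi)$ then $t$ is uniform on $(-\tfrac14,\tfrac34)$.
   Context: Setup: Let $W\ge 1$ be an integer and $\mu\ge 2$ an even integer, and set $K=\mu W+1$. Let $\zeta_u>0$ and $\psi_u\in(0,2\pi)$, and for $k=1,\dots,K$ let $h_{u,k}=\zeta_u^{1/2}e^{j(\psi_u+2\pi(k-1)/\mu)}$, where $j=\sqrt{-1}$. Let $\mathcal K_1=\{k\in\{2,\dots,K\}:\operatorname{Re}(h_{u,k})>0\}$ and $\alpha_{\mathrm I}=\big(\sum_{k\in\mathcal K_1}\operatorname{Re}(h_{u,k})\big)^2$. *)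

(* Defs.v *)
From Stdlib Require Import Reals ZArith List Arith.
From Coquelicot Require Import Complex.
Open Scope R_scope.

(* h_{u,k} = zeta^{1/2} e^{j(psi + 2 pi (k-1)/mu)}, written in polar form
   (Euler's formula): real part sqrt(zeta) cos(theta), imaginary part
   sqrt(zeta) sin(theta). *)
Definition h_uk (zeta psi : R) (mu k : nat) : C :=
  let theta := psi + 2 * PI * INR (k - 1) / INR mu in
  (sqrt zeta * cos theta, sqrt zeta * sin theta).

(* K_1 = { k in {2,...,K} : Re h_{u,k} > 0 }, with K = mu W + 1.
   seq 2 (mu*W) lists 2, 3, ..., mu*W + 1 = K. *)
Definition K1 (W mu : nat) (zeta psi : R) : list nat :=
  filter (fun k => if Rlt_dec 0 (Re (h_uk zeta psi mu k)) then true else false)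
         (seq 2 (mu * W)).

Definition alphaI (W mu : nat) (zeta psi : R) : R :=
  (fold_right Rplus 0 (map (fun k => Re (h_uk zeta psi mu k)) (K1 W mu zeta psi))) ^ 2.

Definition Rceil (x : R) : Z := (- Int_part (- x))%Z.

(* Main.v *)
Require Import Defs.
From Stdlib Require Import Reals ZArith List Arith Lia Lra.
From Coquelicot Require Import Complex.
Open Scope R_scope.

Fixpoint sumL (g : nat -> R) (n : nat) : R :=
  match n with O => 0 | S n => g O + sumL (fun i => g (S i)) n end.

Lemma sumL_ext n : forall f g, (forall i, (i < n)%nat -> f i = g i) -> sumL f n = sumL g n.
Proof.
  induction n; intros f g H; simpl; auto.
  rewrite (H O) by lia. f_equal. apply IHn. intros; apply H; lia.
Qed.

Lemma sumL_add n m : forall g, sumL g (n + m) = sumL g n + sumL (fun i => g (n + i)%nat) m.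
Proof.
  induction n; intros g; simpl.
  - rewrite Rplus_0_l. reflexivity.
  - rewrite IHn. ring.
Qed.

Lemma sumL_last n g : sumL g (S n) = sumL g n + g n.
Proof.
  rewrite <- Nat.add_1_r, sumL_add. simpl. rewrite Nat.add_0_r. ring.
Qed.

Lemma sumL_0 n : sumL (fun _ => 0) n = 0.
Proof. induction n; simpl; auto. rewrite IHn; ring. Qed.

Lemma sumL_scale n : forall k f, sumL (fun i => k * f i) n = k * sumL f n.
Proof. induction n; intros; simpl. ring. rewrite (IHn k (fun i => f (S i))). ring. Qed.

Lemma fold_seq n : forall (f : nat -> R) s,
  fold_right Rplus 0 (map f (seq s n)) = sumL (fun i => f (s + i)%nat) n.
Proof.
  induction n; intros f s; simpl; auto.
  rewrite IHn, Nat.add_0_r. f_equal. apply sumL_ext. intros; f_equal; lia.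
Qed.

Lemma fold_filter (f : nat -> R) (p : nat -> bool) l :
  fold_right Rplus 0 (map f (filter p l)) =
  fold_right Rplus 0 (map (fun k => if p k then f k else 0) l).
Proof.
  induction l; simpl; auto. destruct (p a); simpl; rewrite IHl; ring.
Qed.

Lemma sumL_periodic (g : nat -> R) mu (gp : forall i, g (i + mu)%nat = g i) W :
  sumL g (W * mu) = INR W * sumL g mu.
Proof.
  induction W; simpl. ring.
  rewrite sumL_add. rewrite (sumL_ext _ (fun i => g (mu + i)%nat) g).
  - rewrite IHW. destruct W; simpl; ring.
  - intros. rewrite Nat.add_comm. apply gp.
Qed.

Section Shift.
Variable g : Z -> R.
Variable mu : nat.
Hypothesis gp : forall z, g (z + Z.of_nat mu)%Z = g z.

Definition cs (s : Z) := sumL (fun i => g (s + Z.of_nat i)%Z) mu.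

Lemma cs_shift1 s : cs (s + 1) = cs s.
Proof.
  unfold cs. destruct mu as [|n] eqn:E; [reflexivity|].
  rewrite sumL_last. cbn [sumL].
  rewrite (sumL_ext n (fun i => g (s + 1 + Z.of_nat i)%Z) (fun i => g (s + Z.of_nat (S i))%Z)).
  2:{ intros; f_equal; lia. }
  rewrite Rplus_comm. f_equal.
  rewrite <- (gp (s + Z.of_nat 0)). f_equal. lia.
Qed.

Lemma cs_shift_nat n : forall s, cs (s + Z.of_nat n) = cs s.
Proof.
  induction n; intros s.
  - rewrite Z.add_0_r; auto.
  - rewrite Nat2Z.inj_succ, <- Z.add_1_r, Z.add_assoc, cs_shift1. auto.
Qed.

Lemma cs_any z w : cs z = cs w.
Proof.
  assert (forall z, cs z = cs 0).
  { intros z0. destruct (Z_le_gt_dec 0 z0).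
    - replace z0 with (0 + Z.of_nat (Z.to_nat z0))%Z by lia. apply cs_shift_nat.
    - rewrite <- (cs_shift_nat (Z.to_nat (- z0)) z0). f_equal. lia. }
  rewrite (H z), (H w); auto.
Qed.
End Shift.

Lemma telescope n : forall a d,
  sumL (fun i => cos (a + d * INR i)) n * (2 * sin (d / 2)) =
  sin (a + d * INR n - d / 2) - sin (a - d / 2).
Proof.
  induction n; intros a d; cbn [sumL].
  - simpl INR. replace (a + d * 0 - d/2) with (a - d/2) by ring. ring.
  - rewrite (sumL_ext n _ (fun i => cos ((a + d) + d * INR i))).
    2:{ intros. rewrite S_INR; f_equal; ring. }
    rewrite Rmult_plus_distr_r, IHn, S_INR.
    replace (a + d * (INR n + 1) - d/2) with (a + d + d * INR n - d/2) by ring.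
    replace (a + d - d/2) with (a + d/2) by field.
    replace (a + d * INR 0) with a by (simpl; ring).
    replace (a + d/2) with (a - d/2 + d/2 + d/2) by ring.
    replace (a - d/2) with (a - d/2 + d/2 - d/2) at 2 by ring.
    rewrite (sin_plus (a - d/2 + d/2)), (sin_minus (a - d/2 + d/2)).
    replace (a - d/2 + d/2) with a by ring. ring.
Qed.
Theorem theorem1 (W mu : nat) (zeta psi : R) :
  (1 <= W)%nat -> (2 <= mu)%nat -> Nat.Even mu ->
  0 < zeta -> 0 < psi < 2 * PI ->
  let t := 3 / 4 - psi / (2 * PI) in
  let V := sin (PI / INR mu) / INR W in
  alphaI W mu zeta psi =
  zeta * (cos (- 2 * PI * t - PI / INR mu
               + 2 * PI / INR mu * IZR (Rceil (t * INR mu)))) ^ 2 / V ^ 2.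
Proof.
  intros HW Hmu [n Hn] Hz Hpsi t V.
  assert (Hmu0 : 0 < INR mu) by (apply lt_0_INR; lia).
  assert (HW0 : 0 < INR W) by (apply lt_0_INR; lia).
  assert (Hn2 : INR mu = 2 * INR n) by (rewrite Hn, mult_INR; reflexivity).
  assert (HPI := PI_RGT_0).
  set (d := 2 * PI / INR mu).
  assert (Hd0 : 0 < d) by (unfold d; apply Rdiv_lt_0_compat; lra).
  assert (Hdn : d * INR n = PI) by (unfold d; rewrite Hn2; field; lra).
  set (H := fun x => if Rlt_dec 0 (sqrt zeta * cos x) then sqrt zeta * cos x else 0).
  set (g := fun z : Z => H (psi + d * IZR z)).
  assert (Hper : forall x, H (x + 2 * PI) = H x).
  { intros x. unfold H. rewrite cos_plus, cos_2PI, sin_2PI.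
    replace (cos x * 1 - sin x * 0) with (cos x) by ring. reflexivity. }
  assert (gp : forall z, g (z + Z.of_nat mu)%Z = g z).
  { intros z. unfold g. rewrite plus_IZR, <- INR_IZR_INZ.
    replace (psi + d * (IZR z + INR mu)) with (psi + d * IZR z + 2 * PI)
      by (unfold d; field; lra). apply Hper. }
  set (c := Rceil (t * INR mu)).
  assert (Hc : t * INR mu <= IZR c < t * INR mu + 1).
  { unfold c, Rceil. rewrite opp_IZR. destruct (base_Int_part (- (t * INR mu))). lra. }
  set (a := psi + d * IZR c).
  assert (Ha : 3 * (PI / 2) <= a < 3 * (PI/2) + d).
  { unfold a. assert (E : d * (t * INR mu) = 3 * (PI/2) - psi)
      by (unfold d, t; field; lra).
    split.
    - destruct Hc as [Hc _]. apply Rmult_le_compat_l with (r := d) in Hc; [|lra]. lra.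
    - destruct Hc as [_ Hc]. apply Rmult_lt_compat_l with (r := d) in Hc; [|lra]. lra. }
  assert (Hsum : fold_right Rplus 0 (map (fun k => Re (h_uk zeta psi mu k)) (K1 W mu zeta psi))
           = INR W * cs g mu c).
  { unfold K1. rewrite fold_filter, fold_seq.
    rewrite (sumL_ext _ _ (fun i => g (1 + Z.of_nat i)%Z)).
    2:{ intros i _. unfold g, H, h_uk. cbn [Re fst].
        replace (psi + 2 * PI * INR (2 + i - 1) / INR mu) with (psi + d * IZR (1 + Z.of_nat i)).
        - destruct Rlt_dec; reflexivity.
        - rewrite Z.add_comm, Z.add_1_r, <- Nat2Z.inj_succ, <- INR_IZR_INZ. replace (2 + i - 1)%nat with (S i) by lia.
          unfold d. field. lra. }
    rewrite Nat.mul_comm, sumL_periodic.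
    - f_equal. apply (cs_any g mu gp 1 c).
    - intros i. rewrite Nat2Z.inj_add, Z.add_assoc. apply gp. }
  assert (Hcs : cs g mu c = sqrt zeta * sumL (fun i => cos (a + d * INR i)) n).
  { unfold cs. replace mu with (n + n)%nat by lia. rewrite sumL_add.
    rewrite (sumL_ext n (fun i => g (c + Z.of_nat i)%Z) (fun i => sqrt zeta * cos (a + d * INR i))).
    2:{ intros i Hi. unfold g, H. rewrite plus_IZR, <- INR_IZR_INZ.
        replace (psi + d * (IZR c + INR i)) with (a + d * INR i) by (unfold a; ring).
        assert (Hi' : INR i + 1 <= INR n) by (rewrite <- S_INR; apply le_INR; lia).
        assert (Hi0 : 0 <= INR i) by apply pos_INR.
        assert (Hdi : d * INR i <= PI - d) by nra.
        assert (Hcos : 0 <= cos (a + d * INR i)).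
        { replace (a + d * INR i) with ((a + d * INR i - 2 * PI) + 2 * PI) by ring.
          rewrite cos_plus, cos_2PI, sin_2PI. replace (cos (a + d * INR i - 2 * PI) * 1 - sin (a + d * INR i - 2 * PI) * 0) with (cos (a + d * INR i - 2 * PI)) by ring.
          apply cos_ge_0; nra. }
        assert (0 <= sqrt zeta * cos (a + d * INR i)) by (apply Rmult_le_pos; [apply sqrt_pos|lra]).
        destruct Rlt_dec; lra. }
    rewrite (sumL_ext n (fun i => g (c + Z.of_nat (n + i))%Z) (fun _ => 0)).
    2:{ intros i Hi. unfold g, H. rewrite plus_IZR, <- INR_IZR_INZ, plus_INR.
        replace (psi + d * (IZR c + (INR n + INR i))) with (a + PI + d * INR i) by (unfold a; rewrite <- Hdn; ring).
        assert (Hi' : INR i + 1 <= INR n) by (rewrite <- S_INR; apply le_INR; lia).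
        assert (Hi0 : 0 <= INR i) by apply pos_INR.
        assert (Hdi : d * INR i <= PI - d) by nra.
        assert (Hcos : cos (a + PI + d * INR i) <= 0).
        { replace (a + PI + d * INR i) with ((a + PI + d * INR i - 2 * PI) + 2 * PI) by ring.
          rewrite cos_plus, cos_2PI, sin_2PI. replace (cos (a + PI + d * INR i - 2 * PI) * 1 - sin (a + PI + d * INR i - 2 * PI) * 0) with (cos (a + PI + d * INR i - 2 * PI)) by ring.
          apply cos_le_0; nra. }
        assert (sqrt zeta * cos (a + PI + d * INR i) <= 0).
        { assert (0 <= sqrt zeta) by apply sqrt_pos. nra. }
        destruct Rlt_dec; lra. }
    rewrite sumL_0, sumL_scale. ring. }
  assert (Hsin : 0 < sin (d / 2)).
  { assert (1 <= INR n) by (apply (le_INR 1); lia). apply sin_gt_0. lra. assert (d <= PI) by nra. lra. }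
  assert (Htel := telescope n a d).
  rewrite Hdn in Htel.
  replace (a + PI - d / 2) with (a - d/2 + PI) in Htel by ring.
  rewrite neg_sin in Htel.
  assert (HS : sumL (fun i => cos (a + d * INR i)) n = - sin (a - d/2) / sin (d/2)).
  { apply (Rmult_eq_reg_r (2 * sin (d/2))); [|lra]. rewrite Htel. field. lra. }
  unfold alphaI. rewrite Hsum, Hcs, HS.
  replace (- 2 * PI * t - PI / INR mu + d * IZR c) with (a - d/2 - 3 * (PI/2))
    by (unfold a, d, t; field; lra).
  rewrite cos_minus, cos_3PI2, sin_3PI2.
  unfold V. replace (PI / INR mu) with (d / 2) by (unfold d; field; lra).
  assert (Hsq : sqrt zeta ^ 2 = zeta) by (simpl; rewrite Rmult_1_r; apply sqrt_sqrt; lra).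
  field_simplify; [|lra|lra]. rewrite Hsq. field. lra.
Qed.
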